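(* Let $\star$ be a continuous and sup-continuous triangle function and let $(G,\cdot,D,\star)$ be an invariant probabilistic metric group with identity $e$ (not necessarily complete). Then the group of invertible elements of the monoid $(Lip^1_\star(G,\Delta^+),\odot)$ is $$\mathcal U(Lip^1_\star(G,\Delta^+))=\langle\Pi(G),\mathcal U(\Delta^+)\rangle:=\{\langle f,U\rangle: f\in\Pi(G),\ U\in\mathcal U(\Delta^+)\}.$$ Moreover: (1) for all $f\in\Pi(G)$ and $U\in\mathcal U(\Delta^+)$, $\langle f,U\rangle^{-1}=\langle f^{-1},U^{-1}\rangle$ (where $f^{-1}$ is the inverse of $f$ in the group $(\Pi(G),\odot)$ and $U^{-1}$ the inverse of $U$ in $(\Delta^+,\star)$); (2) if $\mathcal U(\Delta^+)=\{\mathcal H_0\}$, then $(\mathcal U(Lip^1_\star(G,\Delta^+)),\odot,\mathbb D,\star)=(\Pi(G),\odot,\mathbb D,\star)$; (3) if $\mathcal U(\Delta^+)=\{\mathcal H_0\}$ and $G$ is complete, then $(\mathcal U(Lip^1_\star(G,\Delta^+)),\odot,\mathbb D,\star)=(\{\delta_a:a\in G\},\odot,\mathbb D,\star)$, which is isometrically isomorphic (via $\delta$) to $(G,\cdot,D,\star)$.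
   Context: A distribution function is a nondecreasing, left-continuous function $F:[-\infty,+\infty]\to[0,1]$ with $F(-\infty)=0$, $F(+\infty)=1$; $\Delta^+$ is the set of distribution functions with $F(0)=0$, ordered pointwise (a complete lattice with maximum $\mathcal H_0$, $\mathcal H_0(t)=0$ for $t\le0$, $1$ for $t>0$). A triangle function is a binary operation $\star$ on $\Delta^+$ that is commutative, associative, nondecreasing in each argument, with $F\star\mathcal H_0=F$; so $(\Delta^+,\star)$ is a commutative monoid, and $\mathcal U(\Delta^+)$ denotes its group of invertible elements. $\star$ is sup-continuous if $\sup_i(F_i\star L)=(\sup_iF_i)\star L$ for every nonempty family $(F_i)$ and every $L$. $F_n\xrightarrow{w}F$ means $F_n(t)\to F(t)$ at every continuity point $t\in\mathbb R$ of $F$; $\star$ is continuous if $F_n\star L_n\xrightarrow{w}F\star L$ whenever $F_n\xrightarrow{w}F$, $L_n\xrightarrow{w}L$. A probabilistic metric space $(G,D,\star)$ consists of a set $G$, a triangle function $\star$ and $D:G\times G\to\Delta^+$ with (i) $D(p,q)=\mathcal H_0$ iff $p=q$; (ii) $D(p,q)=D(q,p)$; (iii) $D(p,q)\star D(q,r)\le D(p,r)$. If $(G,\cdot)$ is a group and $D(pr,qr)=D(rp,rq)=D(p,q)$ for all $p,q,r$, it is an invariant probabilistic metric group. A sequence $(z_n)$ is Cauchy if $D(z_n,z_p)\xrightarrow{w}\mathcal H_0$ as $n,p\to\infty$; completeness means every Cauchy sequence has a point $z$ with $D(z_n,z)\xrightarrow{w}\mathcal H_0$. $Lip^1_\star(G,\Delta^+)$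 is the set of maps $f:G\to\Delta^+$ with $D(x,y)\star f(y)\le f(x)$ for all $x,y$. $\delta_a(y)=D(y,a)$. For maps $f,g:G\to\Delta^+$, $(f\odot g)(x)=\sup_{y,z\in G,\ yz=x}f(y)\star g(z)$; $(Lip^1_\star(G,\Delta^+),\odot)$ is a monoid with identity $\delta_e$. $\Pi(G)$ is the set of $f\in Lip^1_\star(G,\Delta^+)$ for which there is a Cauchy sequence $(a_n)\subset G$ with $D(a_n,x)\xrightarrow{w}f(x)$ for all $x$; $(\Pi(G),\odot)$ is a group. $\mathbb D(f,g)=\sup_{x\in G}f(x)\star g(x)$ for $f,g\in\Pi(G)$. For $f:G\to\Delta^+$ and $F\in\Delta^+$, $\langle f,F\rangle:G\to\Delta^+$ is $\langle f,F\rangle(x)=f(x)\star F$. *)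

(* Defs.v *)
From Stdlib Require Import Reals Classical ClassicalEpsilon FunctionalExtensionality.
Open Scope R_scope.

(* A distribution function F : [-oo,+oo] -> [0,1] is represented by its
   restriction to R; the values F(-oo)=0 and F(+oo)=1 are fixed by convention. *)
Definition distf := R -> R.

Definition left_continuous_at (F : R -> R) (t : R) : Prop :=
  forall eps, 0 < eps -> exists d, 0 < d /\
    forall s, t - d < s -> s <= t -> Rabs (F s - F t) < eps.

Definition in_Delta (F : distf) : Prop :=
  (forall t, 0 <= F t <= 1) /\
  (forall s t, s <= t -> F s <= F t) /\
  (forall t, left_continuous_at F t) /\
  F 0 = 0.

Definition Fle (F L : distf) : Prop := forall t, F t <= L t.

Definition H0 : distf := fun t => if Rle_dec t 0 then 0 else 1.

(* supremum of a set of reals (meaningful for nonempty bounded sets) *)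
Definition Rsup (E : R -> Prop) : R :=
  match excluded_middle_informative (bound E /\ exists x, E x) with
  | left H => proj1_sig (completeness E (proj1 H) (proj2 H))
  | right _ => 0
  end.

(* pointwise supremum of a family of distribution functions
   (this is the lattice supremum in Delta^+) *)
Definition supD {I : Type} (Fm : I -> distf) : distf :=
  fun t => Rsup (fun r => exists i, r = Fm i t).

Definition is_triangle_function (star : distf -> distf -> distf) : Prop :=
  (forall F L, in_Delta F -> in_Delta L -> in_Delta (star F L)) /\
  (forall F L, in_Delta F -> in_Delta L -> star F L = star L F) /\
  (forall F L M, in_Delta F -> in_Delta L -> in_Delta M ->
      star (star F L) M = star F (star L M)) /\
  (forall F F' L, in_Delta F -> in_Delta F' -> in_Delta L ->
      Fle F F' -> Fle (star F L) (star F' L)) /\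
  (forall F L L', in_Delta F -> in_Delta L -> in_Delta L' ->
      Fle L L' -> Fle (star F L) (star F L')) /\
  (forall F, in_Delta F -> star F H0 = F).

Definition sup_continuous (star : distf -> distf -> distf) : Prop :=
  forall (I : Type) (Fm : I -> distf) (L : distf),
    inhabited I -> (forall i, in_Delta (Fm i)) -> in_Delta L ->
    supD (fun i => star (Fm i) L) = star (supD Fm) L.

Definition wconv (Fs : nat -> distf) (F : distf) : Prop :=
  forall t, continuity_pt F t -> Un_cv (fun n => Fs n t) (F t).

Definition wconv2 (Fs : nat -> nat -> distf) (F : distf) : Prop :=
  forall t, continuity_pt F t -> forall eps, 0 < eps -> exists N : nat,
    forall n p : nat, (n >= N)%nat -> (p >= N)%nat -> Rabs (Fs n p t - F t) < eps.

Definition continuous_tf (star : distf -> distf -> distf) : Prop :=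
  forall (Fs Ls : nat -> distf) (F L : distf),
    (forall n, in_Delta (Fs n)) -> (forall n, in_Delta (Ls n)) ->
    in_Delta F -> in_Delta L ->
    wconv Fs F -> wconv Ls L -> wconv (fun n => star (Fs n) (Ls n)) (star F L).

Definition unit_Delta (star : distf -> distf -> distf) (U : distf) : Prop :=
  in_Delta U /\ exists V, in_Delta V /\ star U V = H0 /\ star V U = H0.

Section PM.
Context {G : Type}.

Definition is_group (mul : G -> G -> G) (e : G) : Prop :=
  (forall x y z, mul (mul x y) z = mul x (mul y z)) /\
  (forall x, mul e x = x) /\ (forall x, mul x e = x) /\
  (forall x, exists y, mul y x = e /\ mul x y = e).

Definition is_PM (star : distf -> distf -> distf) (D : G -> G -> distf) : Prop :=
  (forall p q, in_Delta (D p q)) /\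
  (forall p q, D p q = H0 <-> p = q) /\
  (forall p q, D p q = D q p) /\
  (forall p q r, Fle (star (D p q) (D q r)) (D p r)).

Definition is_invariant (mul : G -> G -> G) (D : G -> G -> distf) : Prop :=
  forall p q r, D (mul p r) (mul q r) = D p q /\ D (mul r p) (mul r q) = D p q.

Definition Cauchy_seq (D : G -> G -> distf) (z : nat -> G) : Prop :=
  wconv2 (fun n p => D (z n) (z p)) H0.

Definition complete_PM (D : G -> G -> distf) : Prop :=
  forall z : nat -> G, Cauchy_seq D z -> exists x, wconv (fun n => D (z n) x) H0.

Definition is_Lip (star : distf -> distf -> distf) (D : G -> G -> distf)
  (f : G -> distf) : Prop :=
  (forall x, in_Delta (f x)) /\ (forall x y, Fle (star (D x y) (f y)) (f x)).

Definition delta (D : G -> G -> distf) (a : G) : G -> distf := fun y => D y a.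

Definition odot (star : distf -> distf -> distf) (mul : G -> G -> G)
  (f g : G -> distf) : G -> distf :=
  fun x t => Rsup (fun r => exists y z, mul y z = x /\ r = star (f y) (g z) t).

Definition unit_Lip (star : distf -> distf -> distf) (mul : G -> G -> G) (e : G)
  (D : G -> G -> distf) (h : G -> distf) : Prop :=
  is_Lip star D h /\ exists k, is_Lip star D k /\
    odot star mul h k = delta D e /\ odot star mul k h = delta D e.

Definition in_Pi (star : distf -> distf -> distf) (D : G -> G -> distf)
  (f : G -> distf) : Prop :=
  is_Lip star D f /\ exists a : nat -> G, Cauchy_seq D a /\
    forall x, wconv (fun n => D (a n) x) (f x).

Definition DD (star : distf -> distf -> distf) (f g : G -> distf) : distf :=
  fun t => Rsup (fun r => exists x, r = star (f x) (g x) t).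

Definition bracket (star : distf -> distf -> distf) (f : G -> distf) (F : distf) : G -> distf :=
  fun x => star (f x) F.

End PM.

(* Main.v *)
Require Import Defs.
From Stdlib Require Import Reals.
From Stdlib Require Import Lra Lia Classical ClassicalEpsilon FunctionalExtensionality.
Open Scope R_scope.

Lemma cont_intro (f : R -> R) x :
  (forall eps, 0 < eps -> exists d, 0 < d /\ forall y, Rabs (y - x) < d -> Rabs (f y - f x) < eps) ->
  continuity_pt f x.
Proof.
  intros H eps Heps. destruct (H eps Heps) as [d [Hd Hy]].
  exists d; split; [lra|]. intros y [_ Hy2]. simpl in *. unfold Rdist in *. apply Hy; auto.
Qed.

Lemma cont_elim (f : R -> R) x : continuity_pt f x ->
  forall eps, 0 < eps -> exists d, 0 < d /\ forall y, Rabs (y - x) < d -> Rabs (f y - f x) < eps.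
Proof.
  intros H eps Heps. destruct (H eps Heps) as [d [Hd Hy]].
  exists d; split; [lra|]. intros y Hyx.
  destruct (Req_dec y x) as [->|Hne].
  - unfold Rminus; rewrite Rplus_opp_r, Rabs_R0; lra.
  - apply (Hy y). split; [split; [exact I| auto] | exact Hyx].
Qed.

Definition tn (n : nat) : R := / (INR n + 1).

Lemma tn_pos n : 0 < tn n.
Proof. unfold tn. apply Rinv_0_lt_compat. pose proof (pos_INR n); lra. Qed.

Lemma tn_decr n m : (n <= m)%nat -> tn m <= tn n.
Proof.
  intros H. unfold tn. apply Rinv_le_contravar. pose proof (pos_INR n); lra.
  apply le_INR in H; lra.
Qed.

Lemma tn_small eps : 0 < eps -> exists N, forall n, (n >= N)%nat -> tn n < eps.
Proof.
  intros He. destruct (archimed_cor1 eps He) as [N [HN HN0]].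
  exists N. intros n Hn. unfold tn. eapply Rle_lt_trans; [|exact HN].
  apply Rinv_le_contravar. apply lt_0_INR; auto.
  apply le_INR in Hn; lra.
Qed.

Lemma Rsup_ub (E : R -> Prop) r : (exists M, forall x, E x -> x <= M) -> E r -> r <= Rsup E.
Proof.
  intros [M HM] Hr. unfold Rsup.
  destruct (excluded_middle_informative _) as [H|H].
  - destruct (completeness E (proj1 H) (proj2 H)) as [m Hm]. simpl. destruct Hm as [Hub Hlub]. apply Hub; auto.
  - exfalso; apply H; split; [exists M; exact HM | exists r; exact Hr].
Qed.

Lemma Rsup_le (E : R -> Prop) M : (exists x, E x) -> (forall x, E x -> x <= M) -> Rsup E <= M.
Proof.
  intros Hne HM. unfold Rsup.
  destruct (excluded_middle_informative _) as [H|H].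
  - destruct (completeness E (proj1 H) (proj2 H)) as [m Hm]. simpl. destruct Hm as [Hub Hlub]. apply Hlub. exact HM.
  - exfalso; apply H; split; [exists M; exact HM | exact Hne].
Qed.

Lemma Rsup_approx (E : R -> Prop) M eps : (exists M', forall x, E x -> x <= M') ->
  (exists x, E x) -> M <= Rsup E -> 0 < eps -> exists x, E x /\ M - eps < x.
Proof.
  intros Hb Hne HM He. apply NNPP; intros Hn.
  assert (Rsup E <= M - eps).
  { apply Rsup_le; auto. intros x Hx. apply Rnot_lt_le. intros Hlt; apply Hn; exists x; auto. }
  lra.
Qed.

Lemma H0_Delta : in_Delta H0.
Proof.
  unfold in_Delta, H0. split; [|split; [|split]].
  - intros t; destruct (Rle_dec t 0); lra.
  - intros s t Hst; destruct (Rle_dec s 0), (Rle_dec t 0); lra.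
  - intros t eps He. destruct (Rle_dec t 0) as [Ht|Ht].
    + exists 1; split; [lra|]. intros s _ Hs. destruct (Rle_dec s 0); [|lra].
      rewrite Rminus_0_r, Rabs_R0; lra.
    + exists t; split; [lra|]. intros s Hs _. destruct (Rle_dec s 0); [lra|].
      rewrite Rminus_diag, Rabs_R0; lra.
  - destruct (Rle_dec 0 0); lra.
Qed.

Lemma Delta_nonpos F t : in_Delta F -> t <= 0 -> F t = 0.
Proof.
  intros [Hb [Hm [_ H0']]] Ht. specialize (Hm t 0 Ht). specialize (Hb t). lra.
Qed.

Lemma Delta_le_H0 F : in_Delta F -> Fle F H0.
Proof.
  intros HF t. unfold H0. destruct (Rle_dec t 0).
  - rewrite (Delta_nonpos F t HF r); lra.
  - destruct HF as [Hb _]; specialize (Hb t); lra.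
Qed.

Lemma H0_pos t : 0 < t -> H0 t = 1.
Proof. intros; unfold H0; destruct (Rle_dec t 0); lra. Qed.
Lemma H0_nonpos t : t <= 0 -> H0 t = 0.
Proof. intros; unfold H0; destruct (Rle_dec t 0); lra. Qed.

Lemma Un_cv_le u l M : Un_cv u l -> (forall n, u n <= M) -> l <= M.
Proof.
  intros Hu HM. apply Rnot_lt_le; intros Hlt.
  destruct (Hu (l - M)) as [N HN]; [lra|]. specialize (HN N (le_n _)). specialize (HM N).
  unfold Rdist in HN. apply Rabs_def2 in HN. lra.
Qed.

Lemma Un_cv_ge u l M : Un_cv u l -> (forall n, M <= u n) -> M <= l.
Proof.
  intros Hu HM. apply Rnot_lt_le; intros Hlt.
  destruct (Hu (M - l)) as [N HN]; [lra|]. specialize (HN N (le_n _)). specialize (HM N).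
  unfold Rdist in HN. apply Rabs_def2 in HN. lra.
Qed.

Lemma cont_locconst (f : R -> R) x d : 0 < d -> (forall y, Rabs (y - x) < d -> f y = f x) -> continuity_pt f x.
Proof.
  intros Hd H. apply cont_intro. intros eps He. exists d; split; auto.
  intros y Hy. rewrite H by auto. rewrite Rminus_diag, Rabs_R0; lra.
Qed.

Lemma H0_cont s : 0 < s -> continuity_pt H0 s.
Proof.
  intros Hs. apply cont_locconst with s; auto. intros y Hy. apply Rabs_def2 in Hy.
  rewrite !H0_pos; lra.
Qed.

Lemma Un_cv_ge' u l M : Un_cv u l -> (exists N, forall n, (n >= N)%nat -> M <= u n) -> M <= l.
Proof.
  intros Hu [N HN]. apply Rnot_lt_le; intros Hlt.
  destruct (Hu (M - l)) as [K HK]; [lra|]. specialize (HK (max N K) ltac:(apply Nat.le_max_r)).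
  specialize (HN (max N K) ltac:(apply Nat.le_max_l)).
  unfold Rdist in HK. apply Rabs_def2 in HK. lra.
Qed.

Definition Gstep (t c : R) : distf := fun r => if Rle_dec r t then 0 else c.

Lemma Gstep_Delta t c : 0 <= t -> 0 <= c <= 1 -> in_Delta (Gstep t c).
Proof.
  intros Ht Hc. unfold in_Delta, Gstep. split; [|split; [|split]].
  - intros r; destruct (Rle_dec r t); lra.
  - intros r1 r2 Hr; destruct (Rle_dec r1 t), (Rle_dec r2 t); lra.
  - intros r eps He. destruct (Rle_dec r t) as [Hr|Hr].
    + exists 1; split; [lra|]. intros s _ Hs. destruct (Rle_dec s t); [|lra].
      rewrite Rminus_diag, Rabs_R0; lra.
    + exists (r - t); split; [lra|]. intros s Hs _. destruct (Rle_dec s t); [lra|].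
      rewrite Rminus_diag, Rabs_R0; lra.
  - destruct (Rle_dec 0 t); lra.
Qed.

Lemma Gstep_cont t c s : t < s -> continuity_pt (Gstep t c) s.
Proof.
  intros Hs. apply cont_locconst with (s - t); [lra|]. intros y Hy. apply Rabs_def2 in Hy.
  unfold Gstep. destruct (Rle_dec y t), (Rle_dec s t); lra.
Qed.


Definition dstep (F : R -> R) (p : R * R) : R * R :=
  let a := fst p in let b := snd p in let m := (a + b) / 2 in
  if Rle_dec (F m - F a) ((F b - F a) / 2) then (a + (m - a) / 3, a + 2 * (m - a) / 3)
  else (m + (b - m) / 3, m + 2 * (b - m) / 3).

Fixpoint diter F a b n : R * R :=
  match n with O => (a, b) | S n => dstep F (diter F a b n) end.

Lemma dstep_prop F p : (forall s t, s <= t -> F s <= F t) -> fst p < snd p ->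
  fst p < fst (dstep F p) /\ fst (dstep F p) < snd (dstep F p) /\ snd (dstep F p) < snd p /\
  F (snd (dstep F p)) - F (fst (dstep F p)) <= (F (snd p) - F (fst p)) / 2.
Proof.
  intros Hm Hab. destruct p as [a b]; simpl in *. unfold dstep; simpl.
  destruct (Rle_dec _ _) as [H|H]; simpl.
  - split; [lra|split;[lra|split;[lra|]]].
    assert (F (a + 2 * ((a + b) / 2 - a) / 3) <= F ((a+b)/2)) by (apply Hm; lra).
    assert (F a <= F (a + ((a + b) / 2 - a) / 3)) by (apply Hm; lra). lra.
  - split; [lra|split;[lra|split;[lra|]]].
    assert (F ((a + b) / 2 + 2 * (b - (a + b) / 2) / 3) <= F b) by (apply Hm; lra).
    assert (F ((a+b)/2) <= F ((a + b) / 2 + (b - (a + b) / 2) / 3)) by (apply Hm; lra). lra.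
Qed.

Lemma diter_prop F a b : (forall s t, s <= t -> F s <= F t) -> a < b -> F b - F a <= 1 ->
  forall n, fst (diter F a b n) < snd (diter F a b n) /\
    fst (diter F a b n) < fst (diter F a b (S n)) /\ snd (diter F a b (S n)) < snd (diter F a b n) /\
    F (snd (diter F a b n)) - F (fst (diter F a b n)) <= tn n.
Proof.
  intros Hm Hab HW. induction n as [|n IH].
  - simpl. destruct (dstep_prop F (a,b) Hm Hab) as [H1 [H2 [H3 H4]]]. simpl in *.
    unfold tn; simpl. replace (0 + 1) with 1 by lra. rewrite Rinv_1. lra.
  - destruct IH as [I1 [I2 [I3 I4]]].
    destruct (dstep_prop F _ Hm I1) as [H1 [H2 [H3 H4]]].
    change (diter F a b (S n)) with (dstep F (diter F a b n)) in *.
    destruct (dstep_prop F _ Hm H2) as [K1 [K2 [K3 K4]]].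
    split; [lra|split; [exact K1|split; [exact K3|]]].
    eapply Rle_trans; [exact H4|]. apply Rle_trans with (tn n / 2); [lra|]. unfold tn. rewrite S_INR.
    pose proof (pos_INR n).
    replace (/ (INR n + 1) / 2) with (/ (2 * (INR n + 1))) by (field; lra).
    apply Rinv_le_contravar; lra.
Qed.

Lemma diter_mono F a b : (forall s t, s <= t -> F s <= F t) -> a < b -> F b - F a <= 1 ->
  forall n m, (n <= m)%nat -> fst (diter F a b n) <= fst (diter F a b m) /\
                              snd (diter F a b m) <= snd (diter F a b n).
Proof.
  intros Hm Hab HW n m Hnm. induction Hnm; [lra|].
  destruct (diter_prop F a b Hm Hab HW m) as [_ [H2 [H3 _]]]. lra.
Qed.

Lemma density F a b : (forall s t, s <= t -> F s <= F t) -> (forall t, 0 <= F t <= 1) -> a < b ->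
  exists x, a < x < b /\ continuity_pt F x.
Proof.
  intros Hm Hb Hab. assert (HW : F b - F a <= 1) by (pose proof (Hb a); pose proof (Hb b); lra).
  pose (fs n := fst (diter F a b n)). pose (sn n := snd (diter F a b n)).
  assert (Hfs : forall n m, fs n < sn m).
  { intros n m. destruct (diter_mono F a b Hm Hab HW n (max n m) ltac:(lia)) as [A _].
    destruct (diter_mono F a b Hm Hab HW m (max n m) ltac:(lia)) as [_ B].
    destruct (diter_prop F a b Hm Hab HW (max n m)) as [C _]. unfold fs, sn; lra. }
  pose (x := Rsup (fun r => exists n, r = fs n)).
  assert (Hx1 : forall n, fs n <= x).
  { intros n. apply Rsup_ub. exists (sn 0%nat). intros r [k ->]. left; apply Hfs. exists n; auto. }
  assert (Hx2 : forall m, x <= sn m).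
  { intros m. apply Rsup_le. exists (fs 0%nat); exists 0%nat; auto. intros r [k ->]. left; apply Hfs. }
  assert (Hin : forall n, fs n < x < sn n).
  { intros n. destruct (diter_prop F a b Hm Hab HW n) as [_ [H2 [H3 _]]].
    specialize (Hx1 (S n)); specialize (Hx2 (S n)). unfold fs, sn in *. lra. }
  exists x. split.
  - specialize (Hin 0%nat). unfold fs, sn in Hin; simpl in Hin. lra.
  - apply cont_intro. intros eps He. destruct (tn_small eps He) as [N HN].
    specialize (HN N (le_n _)). destruct (Hin N) as [L U].
    exists (Rmin (x - fs N) (sn N - x)). split. apply Rmin_glb_lt; lra.
    intros y Hy. assert (Hy1 := Rlt_le_trans _ _ _ Hy (Rmin_l _ _)).
    assert (Hy2 := Rlt_le_trans _ _ _ Hy (Rmin_r _ _)).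
    apply Rabs_def2 in Hy1 as [Hy1 Hy1']. apply Rabs_def2 in Hy2 as [Hy2 Hy2'].
    destruct (diter_prop F a b Hm Hab HW N) as [_ [_ [_ W]]]. fold (fs N) (sn N) in W.
    assert (F (fs N) <= F y) by (apply Hm; lra). assert (F y <= F (sn N)) by (apply Hm; lra).
    assert (F (fs N) <= F x) by (apply Hm; lra). assert (F x <= F (sn N)) by (apply Hm; lra).
    apply Rabs_def1; lra.
Qed.

Lemma wlim_le (Fs : nat -> distf) F (H : R -> R) : in_Delta F -> wconv Fs F ->
  (forall s t, s <= t -> H s <= H t) -> (forall n t, Fs n t <= H t) -> forall t, F t <= H t.
Proof.
  intros HF Hw HH Hn t. apply Rle_plus_epsilon. intros eps He.
  destruct HF as [Hb [Hm [Hl H0']]].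
  destruct (Hl t eps He) as [d [Hd Hdd]].
  destruct (density F (t - d) t Hm Hb ltac:(lra)) as [x [Hx Hc]].
  assert (F x <= H x) by (apply (Un_cv_le (fun n => Fs n x)); [apply Hw; auto| intros; apply Hn]).
  assert (H x <= H t) by (apply HH; lra).
  specialize (Hdd x ltac:(lra) ltac:(lra)). apply Rabs_def2 in Hdd. lra.
Qed.


Section Star.
Variable star : distf -> distf -> distf.
Hypothesis Hstar : is_triangle_function star.

Lemma star_Delta F L : in_Delta F -> in_Delta L -> in_Delta (star F L).
Proof. destruct Hstar as [H _]; auto. Qed.
Lemma star_comm F L : in_Delta F -> in_Delta L -> star F L = star L F.
Proof. destruct Hstar as [_ [H _]]; auto. Qed.
Lemma star_assoc F L M : in_Delta F -> in_Delta L -> in_Delta M -> star (star F L) M = star F (star L M).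
Proof. destruct Hstar as [_ [_ [H _]]]; auto. Qed.
Lemma star_mon1 F F' L : in_Delta F -> in_Delta F' -> in_Delta L -> Fle F F' -> Fle (star F L) (star F' L).
Proof. destruct Hstar as [_ [_ [_ [H _]]]]; auto. Qed.
Lemma star_mon2 F L L' : in_Delta F -> in_Delta L -> in_Delta L' -> Fle L L' -> Fle (star F L) (star F L').
Proof. destruct Hstar as [_ [_ [_ [_ [H _]]]]]; auto. Qed.
Lemma star_H0_r F : in_Delta F -> star F H0 = F.
Proof. destruct Hstar as [_ [_ [_ [_ [_ H]]]]]; auto. Qed.
Lemma star_H0_l F : in_Delta F -> star H0 F = F.
Proof. intros. rewrite star_comm; auto using H0_Delta, star_H0_r. Qed.
Lemma star_le_l F L : in_Delta F -> in_Delta L -> Fle (star F L) F.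
Proof.
  intros HF HL t. pose proof (star_mon2 F L H0 HF HL H0_Delta (Delta_le_H0 L HL) t) as H.
  rewrite star_H0_r in H; auto.
Qed.
Lemma star_le_r F L : in_Delta F -> in_Delta L -> Fle (star F L) L.
Proof.
  intros HF HL t. pose proof (star_mon1 F H0 L HF H0_Delta HL (Delta_le_H0 F HF) t) as H.
  rewrite star_H0_l in H; auto.
Qed.

Lemma unit_trivial U : unit_Delta star U -> U = H0.
Proof.
  intros [HU [V [HV [H1 H2]]]].
  assert (V = H0).
  { apply functional_extensionality; intros t. apply Rle_antisym. apply Delta_le_H0; auto.
    rewrite <- H1. apply star_le_r; auto. }
  subst V. rewrite <- H1. symmetry; apply star_H0_r; auto.
Qed.
End Star.

Lemma wconv_const F : wconv (fun _ => F) F.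
Proof. intros t _ eps He. exists 0%nat. intros. unfold Rdist. rewrite Rminus_diag, Rabs_R0; lra. Qed.

Lemma wconv_H0 (Fs : nat -> distf) (P : nat -> distf) (sg : nat -> nat) :
  (forall n, in_Delta (Fs n)) -> (forall n, (n <= sg n)%nat) ->
  (forall n t, P n t <= Fs n t) -> (forall n, 1 - tn (sg n) < P n (tn (sg n))) -> wconv Fs H0.
Proof.
  intros HD Hsg HP Hv t _ eps He.
  destruct (Rle_dec t 0) as [Ht|Ht].
  - exists 0%nat. intros n _. unfold Rdist. rewrite (Delta_nonpos (Fs n) t (HD n) Ht), H0_nonpos by auto.
    replace (0 - 0) with 0 by ring. rewrite Rabs_R0; lra.
  - destruct (tn_small (Rmin t eps) ltac:(apply Rmin_glb_lt; lra)) as [N HN].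
    exists N. intros n Hn. rewrite H0_pos by lra. unfold Rdist.
    assert (Hs : tn (sg n) < Rmin t eps) by (apply HN; specialize (Hsg n); lia).
    pose proof (Rmin_l t eps). pose proof (Rmin_r t eps).
    destruct (HD n) as [Hb [Hm _]].
    assert (Fs n (tn (sg n)) <= Fs n t) by (apply Hm; lra).
    specialize (HP n (tn (sg n))). specialize (Hv n). specialize (Hb t).
    apply Rabs_def1; lra.
Qed.


Section PMsec.
Variable star : distf -> distf -> distf.
Variable G : Type.
Variables (mul : G -> G -> G) (e : G) (D : G -> G -> distf).
Hypothesis Hstar : is_triangle_function star.
Hypothesis Hcont : continuous_tf star.
Hypothesis Hgrp : is_group mul e.
Hypothesis HPM : is_PM star D.
Hypothesis Hinv : is_invariant mul D.

Lemma D_Delta p q : in_Delta (D p q).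
Proof. destruct HPM as [H _]; auto. Qed.
Lemma D_refl p : D p p = H0.
Proof. destruct HPM as [_ [H _]]. apply H; auto. Qed.
Lemma D_sym p q : D p q = D q p.
Proof. destruct HPM as [_ [_ [H _]]]; auto. Qed.
Lemma D_tri p q r : Fle (star (D p q) (D q r)) (D p r).
Proof. destruct HPM as [_ [_ [_ H]]]; auto. Qed.
Lemma Dr p q r : D (mul p r) (mul q r) = D p q.
Proof. apply Hinv. Qed.
Lemma Dl p q r : D (mul r p) (mul r q) = D p q.
Proof. apply Hinv. Qed.
Lemma massoc x y z : mul (mul x y) z = mul x (mul y z).
Proof. apply Hgrp. Qed.
Lemma mul_e_l x : mul e x = x.
Proof. apply Hgrp. Qed.
Lemma mul_e_r x : mul x e = x.
Proof. apply Hgrp. Qed.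

Definition inv (x : G) : G := proj1_sig (constructive_indefinite_description _
   (proj2 (proj2 (proj2 Hgrp)) x)).
Lemma inv_l x : mul (inv x) x = e.
Proof. unfold inv. destruct (constructive_indefinite_description _ _) as [y Hy]; simpl. apply Hy. Qed.
Lemma inv_r x : mul x (inv x) = e.
Proof. unfold inv. destruct (constructive_indefinite_description _ _) as [y Hy]; simpl. apply Hy. Qed.
Lemma inv_inv x : inv (inv x) = x.
Proof.
  rewrite <- (mul_e_r (inv (inv x))). rewrite <- (inv_l x), <- massoc, inv_l, mul_e_l. reflexivity.
Qed.

Lemma Lip_Delta f x : is_Lip star D f -> in_Delta (f x).
Proof. intros [H _]; auto. Qed.

Lemma odot_ge f g y z t : (forall u, in_Delta (f u)) -> (forall u, in_Delta (g u)) ->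
  star (f y) (g z) t <= odot star mul f g (mul y z) t.
Proof.
  intros Hf Hg. unfold odot. apply Rsup_ub.
  - exists 1. intros r [y' [z' [_ ->]]]. destruct (star_Delta star Hstar _ _ (Hf y') (Hg z')) as [Hb _].
    apply Hb.
  - exists y, z; auto.
Qed.

Lemma odot_eq f g x (T : distf) (Fs : nat -> distf) :
  (forall u, in_Delta (f u)) -> (forall u, in_Delta (g u)) -> in_Delta T ->
  (forall y z, mul y z = x -> Fle (star (f y) (g z)) T) ->
  (forall n, exists y z, mul y z = x /\ Fle (Fs n) (star (f y) (g z))) ->
  wconv Fs T -> odot star mul f g x = T.
Proof.
  intros Hf Hg HT Hub Hex Hw. apply functional_extensionality; intros t.
  assert (Hne : forall s, exists r, exists y z, mul y z = x /\ r = star (f y) (g z) s).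
  { intros s. destruct (Hex 0%nat) as [y [z [Hyz _]]]. eexists; exists y, z; eauto. }
  assert (Hbd : forall s, exists M, forall r, (exists y z, mul y z = x /\ r = star (f y) (g z) s) -> r <= M).
  { intros s. exists 1. intros r [y' [z' [_ ->]]]. destruct (star_Delta star Hstar _ _ (Hf y') (Hg z')) as [Hb _].
    apply Hb. }
  apply Rle_antisym.
  - unfold odot. apply Rsup_le; auto. intros r [y [z [Hyz ->]]]. apply Hub; auto.
  - unfold odot. apply (wlim_le Fs T (fun s => Rsup (fun r => exists y z, mul y z = x /\ r = star (f y) (g z) s))); auto.
    + intros s1 s2 Hs. apply Rsup_le; auto. intros r [y [z [Hyz ->]]].
      apply Rle_trans with (star (f y) (g z) s2).
      * destruct (star_Delta star Hstar _ _ (Hf y) (Hg z)) as [_ [Hm _]]. auto.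
      * apply Rsup_ub; auto. exists y, z; auto.
    + intros n s. destruct (Hex n) as [y [z [Hyz Hle]]].
      apply Rle_trans with (star (f y) (g z) s); auto. apply Rsup_ub; auto. exists y, z; auto.
Qed.

Lemma Pi_UB f a : (forall x, in_Delta (f x)) -> (forall x, wconv (fun n => D (a n) x) (f x)) ->
  forall u v, Fle (star (f u) (f v)) (D u v).
Proof.
  intros Hf Hw u v.
  assert (Hwu : wconv (fun n => D u (a n)) (f u)).
  { replace (fun n => D u (a n)) with (fun n => D (a n) u); auto.
    apply functional_extensionality; intros; apply D_sym. }
  pose proof (Hcont (fun n => D u (a n)) (fun n => D (a n) v) (f u) (f v)
     (fun n => D_Delta _ _) (fun n => D_Delta _ _) (Hf u) (Hf v) Hwu (Hw v)) as Hc.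
  intros t. apply (wlim_le _ _ (D u v) (star_Delta star Hstar _ _ (Hf u) (Hf v)) Hc).
  - destruct (D_Delta u v) as [_ [Hm _]]; auto.
  - intros n s. apply D_tri.
Qed.

Lemma Pi_seq_H0 f a : (forall x, in_Delta (f x)) -> Cauchy_seq D a ->
  (forall x, wconv (fun n => D (a n) x) (f x)) -> wconv (fun n => f (a n)) H0.
Proof.
  intros Hf Hc Hw t _ eps He.
  destruct (Rle_dec t 0) as [Ht|Ht].
  - exists 0%nat. intros n _. unfold Rdist. rewrite (Delta_nonpos (f (a n)) t (Hf _) Ht), H0_nonpos by auto.
    replace (0 - 0) with 0 by ring. rewrite Rabs_R0; lra.
  - destruct (Hc (t/2) (H0_cont (t/2) ltac:(lra)) (eps/2) ltac:(lra)) as [N HN].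
    exists N. intros n Hn. rewrite H0_pos by lra. unfold Rdist.
    destruct (Hf (a n)) as [Hb [Hm _]].
    destruct (density (f (a n)) (t/2) t Hm Hb ltac:(lra)) as [s [Hs Hcs]].
    assert (1 - eps/2 <= f (a n) s).
    { apply (Un_cv_ge' (fun p => D (a p) (a n) s)). apply Hw; auto.
      exists N. intros p Hp. specialize (HN p n Hp Hn). simpl in HN.
      rewrite H0_pos in HN by lra. apply Rabs_def2 in HN.
      destruct (D_Delta (a p) (a n)) as [_ [Hm' _]]. specialize (Hm' (t/2) s ltac:(lra)). lra. }
    assert (f (a n) s <= f (a n) t) by (apply Hm; lra). specialize (Hb t).
    apply Rabs_def1; lra.
Qed.

Lemma Pi_unit f : in_Pi star D f -> unit_Lip star mul e D f.
Proof.
  intros [[Hf HfL] [a [Hca Hwa]]].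
  pose proof (Pi_UB f a Hf Hwa) as HUB.
  pose proof (Pi_seq_H0 f a Hf Hca Hwa) as Hfa.
  assert (HDx : forall x, wconv (fun n => star (D x e) (f (a n))) (D x e)).
  { intros x. pose proof (Hcont (fun _ => D x e) (fun n => f (a n)) (D x e) H0
      (fun _ => D_Delta _ _) (fun n => Hf _) (D_Delta _ _) H0_Delta (wconv_const _) Hfa) as H.
    rewrite (star_H0_r star Hstar (D x e)) in H by apply D_Delta. exact H. }
  split; [split; auto|].
  exists (fun x => f (inv x)). split; [|split].
  - split; [intros; auto|]. intros x y.
    assert (D x y = D (inv x) (inv y)).
    { rewrite <- (Dl x y (inv x)), inv_l. rewrite <- (Dr e (mul (inv x) y) (inv y)).
      rewrite massoc, inv_r, mul_e_r, mul_e_l. apply D_sym. }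
    rewrite H. apply HfL.
  - apply functional_extensionality; intros x. unfold delta.
    apply odot_eq with (Fs := fun n => star (star (D x e) (f (a n))) (f (a n))); auto using D_Delta.
    + intros y z Hyz. intros t. eapply Rle_trans; [apply HUB|].
      rewrite <- (Dr y (inv z) z), inv_l, Hyz. lra.
    + intros n. exists (mul x (a n)), (inv (a n)). split.
      * rewrite massoc, inv_r, mul_e_r; auto.
      * rewrite inv_inv. apply star_mon1; auto using star_Delta, D_Delta.
        rewrite <- (Dr x e (a n)), mul_e_l. apply HfL.
    + pose proof (Hcont _ (fun n => f (a n)) (D x e) H0
        (fun n => star_Delta star Hstar _ _ (D_Delta _ _) (Hf _)) (fun n => Hf _) (D_Delta _ _) H0_Delta (HDx x) Hfa) as H.
      rewrite (star_H0_r star Hstar (D x e)) in H by apply D_Delta. exact H.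
  - apply functional_extensionality; intros x. unfold delta.
    apply odot_eq with (Fs := fun n => star (f (a n)) (star (D x e) (f (a n)))); auto using D_Delta.
    + intros y z Hyz. intros t. eapply Rle_trans; [apply HUB|].
      rewrite <- (Dl (inv y) z y), inv_r, Hyz, D_sym. lra.
    + intros n. exists (inv (a n)), (mul (a n) x). split.
      * rewrite <- massoc, inv_l, mul_e_l; auto.
      * rewrite inv_inv. apply star_mon2; auto using star_Delta, D_Delta.
        rewrite <- (Dl x e (a n)), mul_e_r. apply HfL.
    + pose proof (Hcont (fun n => f (a n)) _ H0 (D x e)
        (fun n => Hf _) (fun n => star_Delta star Hstar _ _ (D_Delta _ _) (Hf _)) H0_Delta (D_Delta _ _) Hfa (HDx x)) as H.
      rewrite (star_H0_l star Hstar (D x e)) in H by apply D_Delta. exact H.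
Qed.

Lemma unit_Pi h : unit_Lip star mul e D h -> in_Pi star D h.
Proof.
  intros [[HhD HhL] [k [[HkD HkL] [Hhk Hkh]]]].
  assert (Hex : forall n, exists p : G * G, mul (fst p) (snd p) = e /\
                  1 - tn n < star (h (fst p)) (k (snd p)) (tn n)).
  { intros n.
    assert (Hv : odot star mul h k e (tn n) = 1).
    { rewrite Hhk. unfold delta. rewrite D_refl, H0_pos; auto. apply tn_pos. }
    unfold odot in Hv.
    destruct (Rsup_approx (fun r : R => exists y z : G, mul y z = e /\ r = star (h y) (k z) (tn n)) 1 (tn n)) as [r [[y [z [Hyz ->]]] Hr]].
    - exists 1. intros r [y [z [_ ->]]]. destruct (star_Delta star Hstar _ _ (HhD y) (HkD z)) as [Hb _]. apply Hb.
    - eexists; exists e, e; split; [apply mul_e_l|reflexivity].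
    - lra.
    - apply tn_pos.
    - exists (y, z); simpl; auto. }
  pose (pp n := proj1_sig (constructive_indefinite_description _ (Hex n))).
  assert (Hp : forall n, mul (fst (pp n)) (snd (pp n)) = e /\
                 1 - tn n < star (h (fst (pp n))) (k (snd (pp n))) (tn n)).
  { intros n. unfold pp. destruct (constructive_indefinite_description _ _) as [p Hp]; exact Hp. }
  pose (ys n := fst (pp n)). pose (zs n := snd (pp n)).
  assert (Hyh : forall sg : nat -> nat, (forall n, (n <= sg n)%nat) -> wconv (fun j => h (ys (sg j))) H0).
  { intros sg Hsg. apply (wconv_H0 _ (fun j => star (h (ys (sg j))) (k (zs (sg j)))) sg); auto.
    intros n t. apply star_le_l; auto. intros n. apply Hp. }
  assert (Hzk : forall sg : nat -> nat, (forall n, (n <= sg n)%nat) -> wconv (fun j => k (zs (sg j))) H0).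
  { intros sg Hsg. apply (wconv_H0 _ (fun j => star (h (ys (sg j))) (k (zs (sg j)))) sg); auto.
    intros n t. apply star_le_r; auto. intros n. apply Hp. }
  assert (Hbd : forall x m t, star (h x) (k (zs m)) t <= D x (ys m) t).
  { intros x m t. pose proof (odot_ge h k x (zs m) t HhD HkD) as H.
    rewrite Hhk in H. unfold delta in H. rewrite <- (Dr x (ys m) (zs m)).
    replace (mul (ys m) (zs m)) with e; [exact H|]. symmetry; apply Hp. }
  split; [split; auto|]. exists ys. split.
  -
    intros t Hct eps He. apply NNPP; intros Hn.
    assert (Hn' : forall N, exists np : nat * nat, (fst np >= N)%nat /\ (snd np >= N)%nat /\
                    eps <= Rabs (D (ys (fst np)) (ys (snd np)) t - H0 t)).
    { intros N. apply NNPP; intros Hc. apply Hn. exists N. intros n p Hn1 Hp1.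
      apply Rnot_le_lt. intros Hle. apply Hc. exists (n, p); simpl; auto. }
    pose (np N := proj1_sig (constructive_indefinite_description _ (Hn' N))).
    assert (Hnp : forall N, (fst (np N) >= N)%nat /\ (snd (np N) >= N)%nat /\
                    eps <= Rabs (D (ys (fst (np N))) (ys (snd (np N))) t - H0 t)).
    { intros N. unfold np. destruct (constructive_indefinite_description _ _) as [q Hq]; exact Hq. }
    pose proof (Hcont _ _ H0 H0 (fun j => HhD _) (fun j => HkD _) H0_Delta H0_Delta
       (Hyh (fun j => fst (np j)) (fun j => proj1 (Hnp j)))
       (Hzk (fun j => snd (np j)) (fun j => proj1 (proj2 (Hnp j))))) as Hc.
    rewrite (star_H0_r star Hstar H0 H0_Delta) in Hc.
    destruct (Hc t Hct eps He) as [N HN]. specialize (HN N (le_n _)). unfold Rdist in HN.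
    destruct (Hnp N) as [_ [_ Hb]].
    set (n := fst (np N)) in *. set (p := snd (np N)) in *.
    pose proof (Hbd (ys n) p t) as B1.
    pose proof (Delta_le_H0 _ (D_Delta (ys n) (ys p)) t) as B2.
    apply Rabs_def2 in HN. rewrite Rabs_left1 in Hb by lra. lra.
  - intros x t Hct eps He.
    destruct (Rle_dec t 0) as [Ht|Ht].
    { exists 0%nat. intros n _. unfold Rdist.
      rewrite (Delta_nonpos _ t (D_Delta _ _) Ht), (Delta_nonpos _ t (HhD x) Ht).
      replace (0 - 0) with 0 by ring. rewrite Rabs_R0; lra. }
    pose proof (Hcont (fun _ => h x) (fun n => k (zs n)) (h x) H0 (fun _ => HhD x) (fun n => HkD _)
       (HhD x) H0_Delta (wconv_const _) (Hzk (fun n => n) (fun n => le_n n))) as HL.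
    rewrite (star_H0_r star Hstar _ (HhD x)) in HL.
    destruct (HL t Hct eps He) as [N1 HN1].
    destruct (cont_elim _ _ Hct (eps/4) ltac:(lra)) as [d [Hd Hdd]].
    set (s := t + d/2).
    assert (Hs : Rabs (h x s - h x t) < eps/4) by (apply Hdd; unfold s; rewrite Rabs_right; lra).
    assert (HU : exists N2, forall n, (n >= N2)%nat -> D (ys n) x t < h x t + eps).
    { destruct (Rle_dec (h x t + eps/2) 1) as [Hc1|Hc1].
      - set (c := h x t + eps/2).
        assert (HG : in_Delta (Gstep t c)).
        { apply Gstep_Delta; [lra|]. destruct (HhD x) as [Hb _]. specialize (Hb t). unfold c; lra. }
        pose proof (Hcont (fun _ => Gstep t c) (fun n => h (ys n)) (Gstep t c) H0 (fun _ => HG)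
          (fun n => HhD _) HG H0_Delta (wconv_const _) (Hyh (fun n => n) (fun n => le_n n))) as HC.
        rewrite (star_H0_r star Hstar _ HG) in HC.
        destruct (HC s (Gstep_cont t c s ltac:(unfold s; lra)) (eps/4) ltac:(lra)) as [N2 HN2].
        exists N2. intros n Hn. specialize (HN2 n Hn). unfold Rdist in HN2.
        apply Rnot_le_lt. intros Hge.
        assert (Hle : Fle (Gstep t c) (D x (ys n))).
        { intros r. unfold Gstep. destruct (Rle_dec r t).
          - destruct (D_Delta x (ys n)) as [Hb _]. apply Hb.
          - rewrite D_sym. destruct (D_Delta (ys n) x) as [_ [Hm _]].
            specialize (Hm t r ltac:(lra)). unfold c; lra. }
        pose proof (star_mon1 star Hstar _ _ (h (ys n)) HG (D_Delta _ _) (HhD _) Hle s) as H1.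
        pose proof (HhL x (ys n) s) as H2.
        assert (Gstep t c s = c) by (unfold Gstep, s; destruct (Rle_dec (t + d/2) t); lra).
        rewrite H in HN2. apply Rabs_def2 in HN2. apply Rabs_def2 in Hs. unfold c in *. lra.
      - exists 0%nat. intros n _. destruct (D_Delta (ys n) x) as [Hb _]. specialize (Hb t). lra. }
    destruct HU as [N2 HN2].
    exists (max N1 N2). intros n Hn.
    specialize (HN1 n ltac:(lia)). specialize (HN2 n ltac:(lia)). unfold Rdist in *.
    pose proof (Hbd x n t) as B. rewrite D_sym in B.
    apply Rabs_def2 in HN1. apply Rabs_def1; lra.
Qed.

Lemma wconv_unique_H0 (Fs : nat -> distf) F : in_Delta F -> wconv Fs F -> wconv Fs H0 -> F = H0.
Proof.
  intros HF H1 H2. apply functional_extensionality; intros t.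
  destruct (Rle_dec t 0) as [Ht|Ht].
  - rewrite H0_nonpos, Delta_nonpos; auto.
  - rewrite H0_pos by lra. apply Rle_antisym; [destruct HF as [Hb _]; apply Hb|].
    destruct HF as [Hb [Hm _]].
    destruct (density F (t/2) t Hm Hb ltac:(lra)) as [s [Hs Hcs]].
    assert (F s = 1).
    { rewrite <- (H0_pos s) by lra. apply (UL_sequence (fun n => Fs n s)).
      apply H1; auto. apply H2. apply H0_cont; lra. }
    specialize (Hm s t ltac:(lra)). lra.
Qed.

Lemma delta_Pi a : in_Pi star D (delta D a).
Proof.
  split.
  - split; [intros; apply D_Delta|]. intros x y. unfold delta. apply D_tri.
  - exists (fun _ => a). split.
    + intros t _ eps He. exists 0%nat. intros. rewrite D_refl. unfold Rminus. rewrite Rplus_opp_r, Rabs_R0; lra.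
    + intros x. unfold delta. rewrite D_sym. apply wconv_const.
Qed.

Lemma Pi_complete h : in_Pi star D h -> complete_PM D -> exists a, h = delta D a.
Proof.
  intros [[HhD HhL] [a [Hc Hw]]] Hcomp.
  destruct (Hcomp a Hc) as [x Hx].
  assert (Hhx : h x = H0) by (apply (wconv_unique_H0 (fun n => D (a n) x)); auto).
  exists x. apply functional_extensionality; intros y. unfold delta.
  apply functional_extensionality; intros t. apply Rle_antisym.
  - pose proof (Pi_UB h a HhD Hw y x t) as H. rewrite Hhx, star_H0_r in H; auto.
  - pose proof (HhL y x t) as H. rewrite Hhx, star_H0_r in H; auto using D_Delta.
Qed.

Lemma delta_odot a b : odot star mul (delta D a) (delta D b) = delta D (mul a b).
Proof.
  apply functional_extensionality; intros x. unfold delta at 3.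
  apply odot_eq with (Fs := fun _ => D x (mul a b)); auto using D_Delta.
  1,2: intros; unfold delta; apply D_Delta.
  - intros y z Hyz. unfold delta. rewrite <- (Dr y a z), <- (Dl z b a), Hyz. apply D_tri.
  - intros n. exists a, (mul (inv a) x). split.
    + rewrite <- massoc, inv_r, mul_e_l; auto.
    + unfold delta. rewrite D_refl, star_H0_l by auto using D_Delta.
      rewrite <- (Dl (mul (inv a) x) b a), <- massoc, inv_r, mul_e_l. intros t; lra.
  - apply wconv_const.
Qed.

Lemma delta_inj a b : delta D a = delta D b -> a = b.
Proof.
  intros H. assert (Hab : D a a = D a b) by (change (delta D a a = delta D b a); rewrite H; reflexivity).
  rewrite D_refl in Hab. destruct HPM as [_ [Hi _]]. apply (proj1 (Hi a b)); auto.
Qed.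

Lemma DD_delta a b : DD star (delta D a) (delta D b) = D a b.
Proof.
  apply functional_extensionality; intros t. unfold DD, delta.
  assert (Hb : exists M, forall r, (exists x, r = star (D x a) (D x b) t) -> r <= M).
  { exists 1. intros r [x ->]. destruct (star_Delta star Hstar _ _ (D_Delta x a) (D_Delta x b)) as [Hb _].
    apply Hb. }
  apply Rle_antisym.
  - apply Rsup_le. exists (star (D a a) (D a b) t), a; auto.
    intros r [x ->]. rewrite (D_sym x a). apply D_tri.
  - apply Rsup_ub; auto. exists a. rewrite D_refl, star_H0_l; auto using D_Delta.
Qed.

Lemma unit_iff h : unit_Lip star mul e D h <-> in_Pi star D h.
Proof. split; [apply unit_Pi | apply Pi_unit]. Qed.
End PMsec.



Theorem theorem2
  (star : distf -> distf -> distf)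
  (G : Type) (mul : G -> G -> G) (e : G) (D : G -> G -> distf)
  (Hstar : is_triangle_function star)
  (Hcont : continuous_tf star)
  (Hsup : sup_continuous star)
  (Hgrp : is_group mul e)
  (HPM : is_PM star D)
  (Hinv : is_invariant mul D) :
  (* U(Lip) = <Pi(G), U(Delta+)> *)
  (forall h : G -> distf,
     unit_Lip star mul e D h <->
     exists f U, in_Pi star D f /\ unit_Delta star U /\ h = bracket star f U) /\
  (* (1) <f,U>^{-1} = <f^{-1},U^{-1}> *)
  (forall f g U V,
     in_Pi star D f -> in_Pi star D g ->
     odot star mul f g = delta D e -> odot star mul g f = delta D e ->
     unit_Delta star U -> in_Delta V -> star U V = H0 -> star V U = H0 ->
     odot star mul (bracket star f U) (bracket star g V) = delta D e /\
     odot star mul (bracket star g V) (bracket star f U) = delta D e) /\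
  (* (2) *)
  ((forall U, unit_Delta star U <-> U = H0) ->
     forall h, unit_Lip star mul e D h <-> in_Pi star D h) /\
  (* (3) *)
  ((forall U, unit_Delta star U <-> U = H0) -> complete_PM D ->
     (forall h, unit_Lip star mul e D h <-> exists a, h = delta D a) /\
     (forall a b, odot star mul (delta D a) (delta D b) = delta D (mul a b)) /\
     (forall a b, delta D a = delta D b -> a = b) /\
     (forall a b, DD star (delta D a) (delta D b) = D a b)).
Proof.
  pose proof (unit_iff star G mul e D Hstar Hcont Hgrp HPM Hinv) as Key.
  assert (Hbr : forall f, in_Pi star D f -> bracket star f H0 = f).
  { intros f [[Hf _] _]. apply functional_extensionality; intros x. unfold bracket.
    apply star_H0_r; auto. }
  split; [|split; [|split]].
  - intros h. split.
    + intros Hu. exists h, H0. pose proof (proj1 (Key h) Hu) as HP. split; [auto|split].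
      * split; [apply H0_Delta|]. exists H0. rewrite star_H0_r by (auto using H0_Delta).
        split; auto using H0_Delta.
      * symmetry; auto.
    + intros [f [U [Hf [HU ->]]]]. rewrite (unit_trivial star Hstar U HU), Hbr by auto. apply Key; auto.
  - intros f g U V Hf Hg H1 H2 HU HV HUV HVU.
    rewrite (unit_trivial star Hstar U HU) in *.
    rewrite star_H0_l in HUV by auto. subst V. rewrite !Hbr by auto. auto.
  - intros _. exact Key.
  - intros _ Hcomp. split; [|split; [|split]].
    + intros h. rewrite Key. split.
      * intros HP. exact (Pi_complete star G D Hstar Hcont HPM h HP Hcomp).
      * intros [a ->]. exact (delta_Pi star G D HPM a).
    + exact (delta_odot star G mul e D Hstar Hgrp HPM Hinv).
    + exact (delta_inj star G D HPM).
    + exact (DD_delta star G D Hstar HPM).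
Qed.
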